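(* For positive integers $n, m$ with $m \le n$ define $$f(n,m) = \sum_{k=0}^{m-1} \binom{n}{k} \left(\frac{m}{n}\right)^k \left(1 - \frac{m}{n}\right)^{n-k}.$$ Then for every integer $n \geq 100$, $f(n,m)$ is an increasing function of $m$ for $1 \le m \leq 11$, i.e. $f(n,1) < f(n,2) < \cdots < f(n,11)$.
   Context: $f(n,m)$ is the probability that a binomial random variable with $n$ trials and success probability $m/n$ is at most $m-1$. *)

(* Defs.v *)
From mathcomp Require Import all_boot all_order all_algebra.
Set Implicit Arguments. Unset Strict Implicit. Unset Printing Implicit Defensive.
Import Order.TTheory GRing.Theory Num.Theory.
Local Open Scope ring_scope.

Definition f (n m : nat) : rat :=
  \sum_(0 <= k < m) ('C(n, k))%:R * ((m%:R / n%:R) ^+ k)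
                      * ((1 - m%:R / n%:R) ^+ (n - k)).

(* Main.v *)
Require Import Defs.
From mathcomp Require Import all_boot all_order all_algebra.
From mathcomp Require Import ring lra zify.
Import Order.TTheory GRing.Theory Num.Theory.
Local Open Scope ring_scope.

Fixpoint binr (x : rat) (k : nat) : rat :=
  if k is k'.+1 then binr x k' * (x - k'%:R) / k%:R else 1.

Lemma binr0 x : binr x 0 = 1. Proof. by []. Qed.
Lemma binrS x k : binr x k.+1 = binr x k * (x - k%:R) / k.+1%:R.
Proof. by []. Qed.

Lemma binRE (n k : nat) : (k <= n)%N -> ('C(n, k))%:R = binr n%:R k.
Proof.
elim: k => [|k IH] hk; first by rewrite bin0.
rewrite binrS -IH; last by apply: ltnW.
have := mul_bin_left n k => /(congr1 (fun z => z%:R : rat)).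
rewrite !natrM natrB; last by apply: ltnW.
move=> E; rewrite [_ * (_ - _)]mulrC -E; field.
by rewrite addrC natr1 pnatr_eq0.
Qed.

Lemma truncB (x : rat) (k : nat) : 0 <= x ->
  1 + k%:R * x + ('C(k, 2))%:R * x ^+ 2 + ('C(k, 3))%:R * x ^+ 3 <= (1 + x) ^+ k.
Proof.
move=> hx; elim: k => [|k IH]; first by rewrite !bin0n /= !mulr0n; lra.
rewrite !binS bin1 !natrD -natr1.
set a := ('C(k, 2))%:R; set b := ('C(k, 3))%:R.
have h3 : 0 <= b by apply: ler0n.
have h4 : 0 <= b * x^+4 by apply: mulr_ge0 => //; apply: exprn_ge0.
apply: le_trans (_ : (1 + x) * (1 + k%:R * x + a * x ^+ 2 + b * x ^+ 3) <= _).
  by rewrite -subr_ge0 (_ : _ - _ = b * x^+4) //; ring.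
by rewrite [(1 + x)^+ k.+1]exprS; apply: ler_wpM2l => //; lra.
Qed.

Lemma hp1 (a b t : rat) : 0 < a -> 0 <= b -> 0 <= t -> 0 < a + t * b.
Proof. by move=> ha hb ht; apply: ltr_wpDr => //; apply: mulr_ge0. Qed.
Lemma hp0 (a b t : rat) : 0 <= a -> 0 <= b -> 0 <= t -> 0 <= a + t * b.
Proof. by move=> ha hb ht; apply: addr_ge0 => //; apply: mulr_ge0. Qed.
Ltac pos := repeat match goal with
  | |- is_true (0 < _ + _ * _) => apply: hp1
  | |- is_true (0 <= _ + _ * _) => apply: hp0
  end; try lra.

Definition v (M : nat) : rat := ((M.+1)%:R / M%:R) ^+ (2 * M).+1.

Lemma v_dec M : (1 <= M)%N -> v M.+1 <= v M.
Proof.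
move=> hM1; rewrite /v.
have hM : 1 <= M%:R :> rat by rewrite ler1n.
have -> : (2 * M.+1).+1 = ((2*M).+1 + 2)%N by lia.
set K := (2 * M).+1.
set q := M.+2%:R / M.+1%:R.
have -> : M.+1%:R / M%:R = q * (1 + 1 / (M%:R * (M%:R + 2))).
  rewrite /q -!natr1; field; lra.
rewrite exprD [X in _ <= X]exprMn.
have hq : 0 <= q ^+ K by apply: exprn_ge0; rewrite /q divr_ge0.
apply: ler_wpM2l => //.
have hx : 0 <= 1 / (M%:R * (M%:R + 2)) :> rat.
  by apply: divr_ge0 => //; apply: mulr_ge0; lra.
have H := @truncB _ K hx.
suff H2 : q ^+ 2 <= 1 + K%:R * (1 / (M%:R * (M%:R + 2))) + ('C(K, 2))%:R * (1 / (M%:R * (M%:R + 2))) ^+ 2 + ('C(K, 3))%:R * (1 / (M%:R * (M%:R + 2))) ^+ 3.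
  exact: le_trans H2 H.
rewrite !binRE; try (rewrite /K; lia).
rewrite !binrS binr0 /K /q -!natr1 natrM.
rewrite -subr_ge0.
rewrite (_ : _ - _ = (78 + (M%:R - 1) * (220 + (M%:R - 1) * (220 + (M%:R - 1) * (96 + (M%:R - 1) * (20 + (M%:R - 1) * 2)))))
   / (6 * (M%:R * (M%:R + 2))^+3 * (M%:R + 1)^+2)); last first.
  field; lra.
apply: divr_ge0; first by pos.
apply: mulr_ge0; first (apply: mulr_ge0; [lra | apply: exprn_ge0; apply: mulr_ge0; lra]).
apply: exprn_ge0; lra.
Qed.

Lemma v_le89 d : v (89 + d) <= v 89.
Proof.
elim: d => [|d IH]; first by rewrite addn0 lexx.
by rewrite addnS; apply: le_trans IH; apply: v_dec; lia.
Qed.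

Definition cc : rat := (36 * 1000 + 787) / (100 * 1000).

Lemma cc_v89 : cc ^+ 2 * v 89 <= 1.
Proof. rewrite /cc /v. Time lra. Qed.

Lemma hlem (u : rat) : 0 < u -> u <= 1/90 -> 0 <= 1 - u / 2 - u ^+ 2 / 2 /\ (1 - u / 2 - u ^+ 2 / 2) ^+ 2 <= 1 - u.
Proof.
move=> hu0 hu1.
have p2 : 0 <= u ^+ 2 by apply: exprn_ge0; lra.
have u2 : u * u <= u * (1/90) by apply: ler_wpM2l; lra.
have u3 : u ^+ 2 * u <= u ^+ 2 * (1/90) by apply: ler_wpM2l; lra.
have u4 : u ^+ 2 * u ^+ 2 <= u ^+ 2 * (1/90).
  apply: ler_wpM2l; first exact: p2. rewrite expr2. lra.
split; first by rewrite expr2; lra.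
have -> : (1 - u / 2 - u ^+ 2 / 2) ^+ 2 = 1 - u - 3/4 * u^+2 + u^+2 * u/2 + u^+2 * u^+2/4 by field.
lra.
Qed.


Lemma cc_ge0 : 0 <= cc.
Proof. rewrite /cc; lra. Qed.

Lemma powid (w : rat) (M k : nat) : (w ^+ (M.+1 + k)) ^+ 2 = w ^+ (2 * M).+1 * (w ^+ k) ^+ 2 * w.
Proof. rewrite -!exprM -exprD -exprSr; congr (_ ^+ _); lia. Qed.

Lemma final_step (c w hh : rat) (M k : nat) : 0 <= c -> 0 <= w -> 0 <= hh ->
  hh ^+ 2 <= w -> c ^+ 2 <= w ^+ (2 * M).+1 -> c * w ^+ k * hh <= w ^+ (M.+1 + k).
Proof.
move=> hc hw hh0 hh2 hc2.
have hwk : 0 <= w ^+ k := exprn_ge0 _ hw.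
have hL : 0 <= c * w ^+ k * hh by apply: mulr_ge0; first apply: mulr_ge0.
have hR : 0 <= w ^+ (M.+1 + k) := exprn_ge0 _ hw.
rewrite -(ler_sqr hL hR) /= powid !exprMn.
apply: ler_pM.
- exact: mulr_ge0 (exprn_ge0 _ hc) (exprn_ge0 _ hwk).
- exact: exprn_ge0 _ hh0.
- apply: ler_wpM2r; first exact: exprn_ge0 _ hwk.
  exact: hc2.
- exact: hh2.
Qed.

Definition h (y : rat) : rat := 1 - 1 / (2 * y) - 1 / (2 * y ^+ 2).

Lemma sbound (N k : nat) : (90 <= N)%N ->
  cc * (1 - 1 / N%:R) ^+ k * h N%:R <= (1 - 1 / N%:R) ^+ (N + k).
Proof.
case: N => [|M] hM; first (exfalso; lia).
have hNR : 90 <= M.+1%:R :> rat by rewrite (ler_nat _ 90).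
have hM89 : 89 <= M%:R :> rat by rewrite (ler_nat _ 89); lia.
have hN1 : M.+1%:R = M%:R + 1 :> rat by rewrite -natr1.
pose u := 1 / M.+1%:R : rat.
have hu0 : 0 < u by rewrite /u divr_gt0; lra.
have hu1 : u <= 1 / 90.
  rewrite /u ler_pdivrMr; last lra.
  rewrite mulrC -ler_pdivrMr; lra.
have hw : 1 - 1 / M.+1%:R = 1 - u by [].
rewrite hw.
have hh : h M.+1%:R = 1 - u / 2 - u ^+ 2 / 2 by rewrite /h /u; field; lra.
rewrite hh.
have hw0 : 0 <= 1 - u by lra.
have hvw : v M * (1 - u) ^+ (2 * M).+1 = 1.
  rewrite /v -exprMn (_ : _ * _ = 1); first exact: expr1n.
  rewrite /u hN1; field; lra.
have hv : v M <= v 89.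
  have := v_le89 (M - 89); rewrite subnKC; first exact.
  lia.
have hwK : 0 <= (1 - u) ^+ (2 * M).+1 := exprn_ge0 _ hw0.
have hc2 : cc ^+ 2 <= (1 - u) ^+ (2 * M).+1.
  apply: le_trans (_ : cc ^+ 2 * v 89 * (1 - u) ^+ (2 * M).+1 <= _).
    have E : cc ^+ 2 = cc ^+ 2 * v M * (1 - u) ^+ (2 * M).+1.
    rewrite -mulrA hvw mulr1; exact: erefl.
    rewrite [X in X <= _]E.
    apply: ler_wpM2r; first exact: hwK.
    apply: ler_wpM2l; last exact: hv.
    exact: exprn_ge0 _ cc_ge0.
  rewrite -[X in _ <= X]mul1r; apply: ler_wpM2r; first exact: hwK.
  exact: cc_v89.
have [hh0 hh2] := hlem u hu0 hu1.
exact: final_step cc_ge0 hw0 hh0 hh2 hc2.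
Qed.

Lemma fE n m : (m < n)%N -> f n m =
  ((n - m)%:R / n%:R) ^+ n * \sum_(0 <= k < m) ('C(n, k))%:R * (m%:R / (n - m)%:R) ^+ k.
Proof.
move=> hmn; rewrite /f big_distrr /=; apply: eq_big_nat => k /andP[_ hk].
have hn : n%:R != 0 :> rat by rewrite pnatr_eq0; lia.
have hnm : (n - m)%:R != 0 :> rat by rewrite pnatr_eq0; lia.
have e1 : 1 - m%:R / n%:R = (n - m)%:R / n%:R :> rat.
  Timeout 10 rewrite natrB; last exact: ltnW hmn.
  Timeout 10 field. Timeout 10 exact: hn.
Timeout 10 rewrite e1.
have ha : (n - m)%:R / n%:R != 0 :> rat.
  Timeout 10 rewrite mulf_neq0 //. Timeout 10 by rewrite invr_eq0.
have e2 : ((n - m)%:R / n%:R) ^+ n = ((n - m)%:R / n%:R) ^+ (n - k) * ((n - m)%:R / n%:R) ^+ k :> rat.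
  Timeout 10 rewrite -exprD subnK; first exact: erefl. lia.
Timeout 10 rewrite e2.
have e3 : m%:R / (n - m)%:R = (m%:R / n%:R) / ((n - m)%:R / n%:R) :> rat.
  Timeout 10 field. Timeout 10 by rewrite hn hnm.
rewrite e3.
move: (expf_neq0 k ha).
set a := (n - m)%:R / n%:R.
set b := m%:R / n%:R.
rewrite (expr_div_n b a k).
set A := a ^+ (n - k).
set B := a ^+ k.
set Bk := b ^+ k.
clearbody A B Bk.
move=> hB.
field. exact: hB.
Qed.

Definition Pm n m : rat := \sum_(0 <= k < m) ('C(n, k))%:R * (m%:R / (n - m)%:R) ^+ k.
Definition Qm n m : rat := \sum_(0 <= k < m.+1) ('C(n, k))%:R * (m.+1%:R / (n - m.+1)%:R) ^+ k.

Lemma key1 n : (100 <= n)%N ->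
  Pm n 1 < cc * (1 - 1 / (n - 1)%:R) ^+ 1 * h (n - 1)%:R * Qm n 1.
Proof.
move=> hn.
have bE : forall k, (k <= 11)%N -> ('C(n, k))%:R = binr n%:R k by move=> k hk; apply: binRE; lia.
have eN : (n - 1)%:R = n%:R - 1%:R :> rat by rewrite natrB; last lia.
have eN1 : (n - 2)%:R = n%:R - 2%:R :> rat by rewrite natrB; last lia.
have hx : 100 <= n%:R :> rat by rewrite (ler_nat _ 100).
rewrite /Pm /Qm eN eN1.
do 3 (rewrite big_nat_recr; last exact: leq0n).
do 2 (rewrite big_geq; last exact: leqnn).
rewrite /= !add0r.
rewrite (bE 0 erefl). rewrite (bE 1 erefl).
rewrite !binrS binr0.
rewrite -subr_gt0.
rewrite (_ : _ - _ = ((((19 * 1000 + 731) * 1000 + 382) * 1000 + 52) + (n%:R - 100) * (((601 * 1000 + 857) * 1000 + 992) + (n%:R - 100) * (((6 * 1000 + 117) * 1000 + 647) + (n%:R - 100) * (20 * 1000 + 722)))) / ((100 * 1000) * 2 * (n%:R - 1%:R) ^+ 3)); last first.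
  rewrite /cc /h. field. lra.
apply: divr_gt0; first by pos.
apply: mulr_gt0; first lra.
apply: exprn_gt0; lra.
Qed.

Lemma key2 n : (100 <= n)%N ->
  Pm n 2 < cc * (1 - 1 / (n - 2)%:R) ^+ 2 * h (n - 2)%:R * Qm n 2.
Proof.
move=> hn.
have bE : forall k, (k <= 11)%N -> ('C(n, k))%:R = binr n%:R k by move=> k hk; apply: binRE; lia.
have eN : (n - 2)%:R = n%:R - 2%:R :> rat by rewrite natrB; last lia.
have eN1 : (n - 3)%:R = n%:R - 3%:R :> rat by rewrite natrB; last lia.
have hx : 100 <= n%:R :> rat by rewrite (ler_nat _ 100).
rewrite /Pm /Qm eN eN1.
do 5 (rewrite big_nat_recr; last exact: leq0n).
do 2 (rewrite big_geq; last exact: leqnn).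
rewrite /= !add0r.
rewrite (bE 0 erefl). rewrite (bE 1 erefl). rewrite (bE 2 erefl).
rewrite !binrS binr0.
rewrite -subr_gt0.
rewrite (_ : _ - _ = (((((4 * 1000 + 584) * 1000 + 685) * 1000 + 186) * 1000 + 394) + (n%:R - 100) * ((((188 * 1000 + 231) * 1000 + 414) * 1000 + 269) + (n%:R - 100) * ((((2 * 1000 + 896) * 1000 + 805) * 1000 + 880) + (n%:R - 100) * (((19 * 1000 + 805) * 1000 + 403) + (n%:R - 100) * (50 * 1000 + 758))))) / ((200 * 1000) * 2 * (n%:R - 2%:R) ^+ 4)); last first.
  rewrite /cc /h. field. lra.
apply: divr_gt0; first by pos.
apply: mulr_gt0; first lra.
apply: exprn_gt0; lra.
Qed.

Lemma key3 n : (100 <= n)%N ->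
  Pm n 3 < cc * (1 - 1 / (n - 3)%:R) ^+ 3 * h (n - 3)%:R * Qm n 3.
Proof.
move=> hn.
have bE : forall k, (k <= 11)%N -> ('C(n, k))%:R = binr n%:R k by move=> k hk; apply: binRE; lia.
have eN : (n - 3)%:R = n%:R - 3%:R :> rat by rewrite natrB; last lia.
have eN1 : (n - 4)%:R = n%:R - 4%:R :> rat by rewrite natrB; last lia.
have hx : 100 <= n%:R :> rat by rewrite (ler_nat _ 100).
rewrite /Pm /Qm eN eN1.
do 7 (rewrite big_nat_recr; last exact: leq0n).
do 2 (rewrite big_geq; last exact: leqnn).
rewrite /= !add0r.
rewrite (bE 0 erefl). rewrite (bE 1 erefl). rewrite (bE 2 erefl). rewrite (bE 3 erefl).
rewrite !binrS binr0.
rewrite -subr_gt0.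
rewrite (_ : _ - _ = ((((((1 * 1000 + 48) * 1000 + 427) * 1000 + 178) * 1000 + 237) * 1000 + 120) + (n%:R - 100) * (((((54 * 1000 + 245) * 1000 + 988) * 1000 + 746) * 1000 + 592) + (n%:R - 100) * (((((1 * 1000 + 122) * 1000 + 72) * 1000 + 43) * 1000 + 296) + (n%:R - 100) * ((((11 * 1000 + 598) * 1000 + 893) * 1000 + 432) + (n%:R - 100) * (((59 * 1000 + 918) * 1000 + 847) + (n%:R - 100) * (123 * 1000 + 754)))))) / ((300 * 1000) * 2 * (n%:R - 3%:R) ^+ 5)); last first.
  rewrite /cc /h. field. lra.
apply: divr_gt0; first by pos.
apply: mulr_gt0; first lra.
apply: exprn_gt0; lra.
Qed.

Lemma key4 n : (100 <= n)%N ->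
  Pm n 4 < cc * (1 - 1 / (n - 4)%:R) ^+ 4 * h (n - 4)%:R * Qm n 4.
Proof.
move=> hn.
have bE : forall k, (k <= 11)%N -> ('C(n, k))%:R = binr n%:R k by move=> k hk; apply: binRE; lia.
have eN : (n - 4)%:R = n%:R - 4%:R :> rat by rewrite natrB; last lia.
have eN1 : (n - 5)%:R = n%:R - 5%:R :> rat by rewrite natrB; last lia.
have hx : 100 <= n%:R :> rat by rewrite (ler_nat _ 100).
rewrite /Pm /Qm eN eN1.
do 9 (rewrite big_nat_recr; last exact: leq0n).
do 2 (rewrite big_geq; last exact: leqnn).
rewrite /= !add0r.
rewrite (bE 0 erefl). rewrite (bE 1 erefl). rewrite (bE 2 erefl). rewrite (bE 3 erefl). rewrite (bE 4 erefl).
rewrite !binrS binr0.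
rewrite -subr_gt0.
rewrite (_ : _ - _ = (((((((1 * 1000 + 443) * 1000 + 340) * 1000 + 763) * 1000 + 133) * 1000) * 1000) + (n%:R - 100) * ((((((90 * 1000 + 295) * 1000 + 380) * 1000 + 76) * 1000 + 868) * 1000 + 750) + (n%:R - 100) * ((((((2 * 1000 + 352) * 1000 + 177) * 1000 + 962) * 1000 + 433) * 1000 + 125) + (n%:R - 100) * (((((32 * 1000 + 659) * 1000 + 121) * 1000 + 522) * 1000 + 625) + (n%:R - 100) * ((((254 * 1000 + 919) * 1000 + 584) * 1000 + 325) + (n%:R - 100) * ((((1 * 1000 + 60) * 1000 + 602) * 1000 + 529) + (n%:R - 100) * ((1 * 1000 + 837) * 1000 + 606))))))) / (((2 * 1000 + 400) * 1000) * 2 * (n%:R - 4%:R) ^+ 6)); last first.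
  rewrite /cc /h. field. lra.
apply: divr_gt0; first by pos.
apply: mulr_gt0; first lra.
apply: exprn_gt0; lra.
Qed.

Lemma key5 n : (100 <= n)%N ->
  Pm n 5 < cc * (1 - 1 / (n - 5)%:R) ^+ 5 * h (n - 5)%:R * Qm n 5.
Proof.
move=> hn.
have bE : forall k, (k <= 11)%N -> ('C(n, k))%:R = binr n%:R k by move=> k hk; apply: binRE; lia.
have eN : (n - 5)%:R = n%:R - 5%:R :> rat by rewrite natrB; last lia.
have eN1 : (n - 6)%:R = n%:R - 6%:R :> rat by rewrite natrB; last lia.
have hx : 100 <= n%:R :> rat by rewrite (ler_nat _ 100).
rewrite /Pm /Qm eN eN1.
do 11 (rewrite big_nat_recr; last exact: leq0n).
do 2 (rewrite big_geq; last exact: leqnn).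
rewrite /= !add0r.
rewrite (bE 0 erefl). rewrite (bE 1 erefl). rewrite (bE 2 erefl). rewrite (bE 3 erefl). rewrite (bE 4 erefl). rewrite (bE 5 erefl).
rewrite !binrS binr0.
rewrite -subr_gt0.
rewrite (_ : _ - _ = (((((((165 * 1000 + 811) * 1000 + 395) * 1000 + 968) * 1000 + 996) * 1000 + 935) * 1000 + 680) + (n%:R - 100) * (((((((12 * 1000 + 190) * 1000 + 659) * 1000 + 802) * 1000 + 986) * 1000 + 917) * 1000 + 24) + (n%:R - 100) * ((((((383 * 1000 + 830) * 1000 + 693) * 1000 + 434) * 1000 + 629) * 1000 + 664) + (n%:R - 100) * ((((((6 * 1000 + 709) * 1000 + 199) * 1000 + 56) * 1000 + 136) * 1000 + 932) + (n%:R - 100) * (((((70 * 1000 + 316) * 1000 + 522) * 1000 + 111) * 1000 + 830) + (n%:R - 100) * ((((441 * 1000 + 888) * 1000 + 126) * 1000 + 606) + (n%:R - 100) * ((((1 * 1000 + 541) * 1000 + 783) * 1000 + 561) + (n%:R - 100) * ((2 * 1000 + 304) * 1000 + 78)))))))) / (((1 * 1000 + 500) * 1000) * 2 * (n%:R - 5%:R) ^+ 7)); last first.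
  rewrite /cc /h. field. lra.
apply: divr_gt0; first by pos.
apply: mulr_gt0; first lra.
apply: exprn_gt0; lra.
Qed.

Lemma key6 n : (100 <= n)%N ->
  Pm n 6 < cc * (1 - 1 / (n - 6)%:R) ^+ 6 * h (n - 6)%:R * Qm n 6.
Proof.
move=> hn.
have bE : forall k, (k <= 11)%N -> ('C(n, k))%:R = binr n%:R k by move=> k hk; apply: binRE; lia.
have eN : (n - 6)%:R = n%:R - 6%:R :> rat by rewrite natrB; last lia.
have eN1 : (n - 7)%:R = n%:R - 7%:R :> rat by rewrite natrB; last lia.
have hx : 100 <= n%:R :> rat by rewrite (ler_nat _ 100).
rewrite /Pm /Qm eN eN1.
do 13 (rewrite big_nat_recr; last exact: leq0n).
do 2 (rewrite big_geq; last exact: leqnn).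
rewrite /= !add0r.
rewrite (bE 0 erefl). rewrite (bE 1 erefl). rewrite (bE 2 erefl). rewrite (bE 3 erefl). rewrite (bE 4 erefl). rewrite (bE 5 erefl). rewrite (bE 6 erefl).
rewrite !binrS binr0.
rewrite -subr_gt0.
rewrite (_ : _ - _ = (((((((((1 * 1000 + 521) * 1000 + 332) * 1000 + 810) * 1000 + 521) * 1000 + 504) * 1000 + 812) * 1000 + 328) * 1000 + 320) + (n%:R - 100) * ((((((((128 * 1000 + 750) * 1000 + 905) * 1000 + 629) * 1000 + 637) * 1000 + 368) * 1000 + 776) * 1000 + 676) + (n%:R - 100) * ((((((((4 * 1000 + 763) * 1000 + 78) * 1000 + 273) * 1000 + 743) * 1000 + 671) * 1000 + 892) * 1000 + 896) + (n%:R - 100) * (((((((100 * 1000 + 609) * 1000 + 268) * 1000 + 531) * 1000 + 228) * 1000 + 760) * 1000 + 411) + (n%:R - 100) * (((((((1 * 1000 + 327) * 1000 + 197) * 1000 + 12) * 1000 + 297) * 1000 + 410) * 1000 + 906) + (n%:R - 100) * ((((((11 * 1000 + 196) * 1000 + 824) * 1000 + 538) * 1000 + 743) * 1000 + 274) + (n%:R - 100) * (((((58 * 1000 + 997) * 1000 + 56) * 1000 + 167) * 1000 + 824) + (n%:R - 100) * ((((177 * 1000 + 515) * 1000 + 634) * 1000 + 39) + (n%:R - 100) * ((233 * 1000 + 529) * 1000 + 494))))))))) / (((72 * 1000) * 1000) * 2 * (n%:R - 6%:R) ^+ 8)); last first.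
  rewrite /cc /h. field. lra.
apply: divr_gt0; first by pos.
apply: mulr_gt0; first lra.
apply: exprn_gt0; lra.
Qed.

Lemma key7 n : (100 <= n)%N ->
  Pm n 7 < cc * (1 - 1 / (n - 7)%:R) ^+ 7 * h (n - 7)%:R * Qm n 7.
Proof.
move=> hn.
have bE : forall k, (k <= 11)%N -> ('C(n, k))%:R = binr n%:R k by move=> k hk; apply: binRE; lia.
have eN : (n - 7)%:R = n%:R - 7%:R :> rat by rewrite natrB; last lia.
have eN1 : (n - 8)%:R = n%:R - 8%:R :> rat by rewrite natrB; last lia.
have hx : 100 <= n%:R :> rat by rewrite (ler_nat _ 100).
rewrite /Pm /Qm eN eN1.
do 15 (rewrite big_nat_recr; last exact: leq0n).
do 2 (rewrite big_geq; last exact: leqnn).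
rewrite /= !add0r.
rewrite (bE 0 erefl). rewrite (bE 1 erefl). rewrite (bE 2 erefl). rewrite (bE 3 erefl). rewrite (bE 4 erefl). rewrite (bE 5 erefl). rewrite (bE 6 erefl). rewrite (bE 7 erefl).
rewrite !binrS binr0.
rewrite -subr_gt0.
rewrite (_ : _ - _ = (((((((((130 * 1000 + 318) * 1000 + 204) * 1000 + 982) * 1000 + 461) * 1000 + 443) * 1000 + 412) * 1000 + 738) * 1000 + 560) + (n%:R - 100) * (((((((((12 * 1000 + 496) * 1000 + 756) * 1000 + 132) * 1000 + 661) * 1000 + 375) * 1000 + 229) * 1000 + 778) * 1000 + 608) + (n%:R - 100) * ((((((((532 * 1000 + 102) * 1000 + 566) * 1000 + 234) * 1000 + 458) * 1000 + 874) * 1000 + 773) * 1000 + 888) + (n%:R - 100) * ((((((((13 * 1000 + 204) * 1000 + 425) * 1000 + 298) * 1000 + 229) * 1000 + 840) * 1000 + 346) * 1000 + 740) + (n%:R - 100) * (((((((210 * 1000 + 468) * 1000 + 271) * 1000 + 3) * 1000 + 282) * 1000 + 708) * 1000 + 696) + (n%:R - 100) * (((((((2 * 1000 + 234) * 1000 + 645) * 1000 + 714) * 1000 + 888) * 1000 + 216) * 1000 + 28) + (n%:R - 100) * ((((((15 * 1000 + 805) * 1000 + 270) * 1000 + 524) * 1000 + 882) * 1000 + 832) + (n%:R - 100) * (((((71 * 1000 + 810) * 1000 + 373) * 1000 + 283) * 1000 + 500) + (n%:R - 100) * ((((190 * 1000 + 186) * 1000 + 939) * 1000 + 19) + (n%:R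 - 100) * ((223 * 1000 + 715) * 1000 + 494)))))))))) / (((31 * 1000 + 500) * 1000) * 2 * (n%:R - 7%:R) ^+ 9)); last first.
  rewrite /cc /h. field. lra.
apply: divr_gt0; first by pos.
apply: mulr_gt0; first lra.
apply: exprn_gt0; lra.
Qed.

Lemma key8 n : (100 <= n)%N ->
  Pm n 8 < cc * (1 - 1 / (n - 8)%:R) ^+ 8 * h (n - 8)%:R * Qm n 8.
Proof.
move=> hn.
have bE : forall k, (k <= 11)%N -> ('C(n, k))%:R = binr n%:R k by move=> k hk; apply: binRE; lia.
have eN : (n - 8)%:R = n%:R - 8%:R :> rat by rewrite natrB; last lia.
have eN1 : (n - 9)%:R = n%:R - 9%:R :> rat by rewrite natrB; last lia.
have hx : 100 <= n%:R :> rat by rewrite (ler_nat _ 100).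
rewrite /Pm /Qm eN eN1.
do 17 (rewrite big_nat_recr; last exact: leq0n).
do 2 (rewrite big_geq; last exact: leqnn).
rewrite /= !add0r.
rewrite (bE 0 erefl). rewrite (bE 1 erefl). rewrite (bE 2 erefl). rewrite (bE 3 erefl). rewrite (bE 4 erefl). rewrite (bE 5 erefl). rewrite (bE 6 erefl). rewrite (bE 7 erefl). rewrite (bE 8 erefl).
rewrite !binrS binr0.
rewrite -subr_gt0.
rewrite (_ : _ - _ = (((((((((((3 * 1000 + 313) * 1000 + 934) * 1000 + 367) * 1000 + 470) * 1000 + 368) * 1000 + 788) * 1000 + 61) * 1000 + 682) * 1000 + 726) * 1000 + 400) + (n%:R - 100) * ((((((((((355 * 1000 + 653) * 1000 + 116) * 1000 + 303) * 1000 + 518) * 1000 + 15) * 1000 + 887) * 1000 + 828) * 1000 + 925) * 1000 + 200) + (n%:R - 100) * ((((((((((17 * 1000 + 157) * 1000 + 825) * 1000 + 443) * 1000 + 97) * 1000 + 86) * 1000 + 477) * 1000 + 638) * 1000 + 77) * 1000 + 4) + (n%:R - 100) * (((((((((490 * 1000 + 26) * 1000 + 64) * 1000 + 406) * 1000 + 528) * 1000 + 892) * 1000 + 674) * 1000 + 95) * 1000 + 752) + (n%:R - 100) * (((((((((9 * 1000 + 175) * 1000 + 570) * 1000 + 574) * 1000 + 644) * 1000 + 931) * 1000 + 247) * 1000 + 913) * 1000 + 549) + (n%:R - 100) * ((((((((117 * 1000 + 705) * 1000 + 968) * 1000 + 274) * 1000 + 254) * 1000 + 156) * 1000 + 889)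 * 1000 + 869) + (n%:R - 100) * ((((((((1 * 1000 + 47) * 1000 + 680) * 1000 + 50) * 1000 + 20) * 1000 + 621) * 1000 + 587) * 1000 + 584) + (n%:R - 100) * (((((((6 * 1000 + 389) * 1000 + 204) * 1000 + 630) * 1000 + 653) * 1000 + 655) * 1000 + 318) + (n%:R - 100) * ((((((25 * 1000 + 550) * 1000 + 245) * 1000 + 515) * 1000 + 673) * 1000 + 281) + (n%:R - 100) * (((((60 * 1000 + 502) * 1000 + 775) * 1000 + 877) * 1000 + 701) + (n%:R - 100) * (((64 * 1000 + 425) * 1000 + 462) * 1000 + 822))))))))))) / ((((4 * 1000 + 32) * 1000) * 1000) * 2 * (n%:R - 8%:R) ^+ 10)); last first.
  rewrite /cc /h. field. lra.
apply: divr_gt0; first by pos.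
apply: mulr_gt0; first lra.
apply: exprn_gt0; lra.
Qed.

Lemma key9 n : (100 <= n)%N ->
  Pm n 9 < cc * (1 - 1 / (n - 9)%:R) ^+ 9 * h (n - 9)%:R * Qm n 9.
Proof.
move=> hn.
have bE : forall k, (k <= 11)%N -> ('C(n, k))%:R = binr n%:R k by move=> k hk; apply: binRE; lia.
have eN : (n - 9)%:R = n%:R - 9%:R :> rat by rewrite natrB; last lia.
have eN1 : (n - 10)%:R = n%:R - 10%:R :> rat by rewrite natrB; last lia.
have hx : 100 <= n%:R :> rat by rewrite (ler_nat _ 100).
rewrite /Pm /Qm eN eN1.
do 19 (rewrite big_nat_recr; last exact: leq0n).
do 2 (rewrite big_geq; last exact: leqnn).
rewrite /= !add0r.
rewrite (bE 0 erefl). rewrite (bE 1 erefl). rewrite (bE 2 erefl). rewrite (bE 3 erefl). rewrite (bE 4 erefl). rewrite (bE 5 erefl). rewrite (bE 6 erefl). rewrite (bE 7 erefl). rewrite (bE 8 erefl). rewrite (bE 9 erefl).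
rewrite !binrS binr0.
rewrite -subr_gt0.
rewrite (_ : _ - _ = (((((((((((18 * 1000 + 669) * 1000 + 187) * 1000 + 590) * 1000 + 196) * 1000 + 508) * 1000 + 649) * 1000 + 578) * 1000 + 347) * 1000 + 200) * 1000) + (n%:R - 100) * (((((((((((2 * 1000 + 220) * 1000 + 105) * 1000 + 298) * 1000 + 891) * 1000 + 722) * 1000 + 971) * 1000 + 128) * 1000 + 379) * 1000 + 10) * 1000) + (n%:R - 100) * ((((((((((119 * 1000 + 863) * 1000 + 584) * 1000 + 403) * 1000 + 537) * 1000 + 790) * 1000 + 297) * 1000 + 36) * 1000 + 137) * 1000 + 500) + (n%:R - 100) * ((((((((((3 * 1000 + 878) * 1000 + 550) * 1000 + 359) * 1000 + 408) * 1000 + 559) * 1000 + 930) * 1000 + 990) * 1000 + 705) * 1000) + (n%:R - 100) * (((((((((83 * 1000 + 580) * 1000 + 308) * 1000 + 381) * 1000 + 935) * 1000 + 921) * 1000 + 129) * 1000 + 663) * 1000 + 125) + (n%:R - 100) * (((((((((1 * 1000 + 259) * 1000 + 517) * 1000 + 533) * 1000 + 682) * 1000 + 846) * 1000 + 815) * 1000 + 418) * 1000 + 125) + (n%:R - 100) * ((((((((13 * 1000 + 544) * 1000 + 597) * 1000 + 258) * 1000 + 401) * 1000 + 991) * 1000 + 945) * 1000 + 625) + (n%:R - 100) * (((((((103 * 1000 + 946) * 1000 + 473) * 1000 + 984) * 1000 + 786) * 1000 + 618) * 1000 + 125) + (n%:R - 100) * ((((((557 * 1000 + 930) * 1000 +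 127) * 1000 + 195) * 1000 + 547) * 1000 + 875) + (n%:R - 100) * ((((((1 * 1000 + 994) * 1000 + 821) * 1000 + 352) * 1000 + 934) * 1000 + 675) + (n%:R - 100) * (((((4 * 1000 + 276) * 1000 + 28) * 1000 + 598) * 1000 + 729) + (n%:R - 100) * (((4 * 1000 + 163) * 1000 + 228) * 1000 + 251)))))))))))) / (((113 * 1000 + 400) * 1000) * 2 * (n%:R - 9%:R) ^+ 11)); last first.
  rewrite /cc /h. field. lra.
apply: divr_gt0; first by pos.
apply: mulr_gt0; first lra.
apply: exprn_gt0; lra.
Qed.

Lemma key10 n : (100 <= n)%N ->
  Pm n 10 < cc * (1 - 1 / (n - 10)%:R) ^+ 10 * h (n - 10)%:R * Qm n 10.
Proof.
move=> hn.
have bE : forall k, (k <= 11)%N -> ('C(n, k))%:R = binr n%:R k by move=> k hk; apply: binRE; lia.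
have eN : (n - 10)%:R = n%:R - 10%:R :> rat by rewrite natrB; last lia.
have eN1 : (n - 11)%:R = n%:R - 11%:R :> rat by rewrite natrB; last lia.
have hx : 100 <= n%:R :> rat by rewrite (ler_nat _ 100).
rewrite /Pm /Qm eN eN1.
do 21 (rewrite big_nat_recr; last exact: leq0n).
do 2 (rewrite big_geq; last exact: leqnn).
rewrite /= !add0r.
rewrite (bE 0 erefl). rewrite (bE 1 erefl). rewrite (bE 2 erefl). rewrite (bE 3 erefl). rewrite (bE 4 erefl). rewrite (bE 5 erefl). rewrite (bE 6 erefl). rewrite (bE 7 erefl). rewrite (bE 8 erefl). rewrite (bE 9 erefl). rewrite (bE 10 erefl).
rewrite !binrS binr0.
rewrite -subr_gt0.
rewrite (_ : _ - _ = (((((((((((((12 * 1000 + 10) * 1000 + 218) * 1000 + 788) * 1000 + 409) * 1000 + 746) * 1000 + 774) * 1000 + 717) * 1000 + 995) * 1000 + 10) * 1000 + 281) * 1000 + 958) * 1000 + 400) + (n%:R - 100) * (((((((((((((1 * 1000 + 569) * 1000 + 701) * 1000 + 974) * 1000 + 502) * 1000 + 499) * 1000 + 858) * 1000 + 287) * 1000 + 665) * 1000 + 136) * 1000 + 182) * 1000 + 478) * 1000 + 880) + (n%:R - 100) * ((((((((((((93 * 1000 + 906) * 1000 + 470) * 1000 + 357) * 1000 + 384) * 1000 + 462) * 1000 + 800) * 1000 + 966) * 1000 + 603) * 1000 + 662) * 1000 + 287) * 1000 + 688) + (n%:R - 100) * ((((((((((((3 * 1000 + 400) * 1000 + 592)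 * 1000 + 145) * 1000 + 880) * 1000 + 9) * 1000 + 790) * 1000 + 276) * 1000 + 358) * 1000 + 467) * 1000 + 306) * 1000 + 468) + (n%:R - 100) * (((((((((((83 * 1000 + 25) * 1000 + 755) * 1000 + 178) * 1000 + 733) * 1000 + 128) * 1000 + 225) * 1000 + 252) * 1000 + 502) * 1000 + 543) * 1000 + 214) + (n%:R - 100) * (((((((((((1 * 1000 + 439) * 1000 + 899) * 1000 + 24) * 1000 + 46) * 1000 + 114) * 1000 + 299) * 1000 + 310) * 1000 + 188) * 1000 + 321) * 1000 + 265) + (n%:R - 100) * ((((((((((18 * 1000 + 189) * 1000 + 759) * 1000 + 315) * 1000 + 53) * 1000 + 883) * 1000 + 934) * 1000 + 301) * 1000 + 154) * 1000 + 104) + (n%:R - 100) * (((((((((168 * 1000 + 655) * 1000 + 468) * 1000 + 386) * 1000 + 520) * 1000 + 640) * 1000 + 211) * 1000 + 636) * 1000 + 69) + (n%:R - 100) * (((((((((1 * 1000 + 139) * 1000 + 184) * 1000 + 612) * 1000 + 152) * 1000 + 704) * 1000 + 490) * 1000 + 20) * 1000 + 812) + (n%:R - 100) * ((((((((5 * 1000 + 466) * 1000 + 862) * 1000 + 714) * 1000 + 533) * 1000 + 420) * 1000 + 714) * 1000 + 355) + (n%:R - 100) * (((((((17 * 1000 + 693) * 1000 + 626) * 1000 + 349) * 1000 + 676) * 1000 + 551) * 1000 + 8) + (n%:R - 100) * ((((((34 * 1000 + 678) * 1000 + 394) * 1000 + 559) * 1000 + 123) * 1000 + 763) + (n%:R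 - 100) * ((((31 * 1000 + 127) * 1000 + 570) * 1000 + 783) * 1000 + 974))))))))))))) / ((((362 * 1000 + 880) * 1000) * 1000) * 2 * (n%:R - 10%:R) ^+ 12)); last first.
  rewrite /cc /h. field. lra.
apply: divr_gt0; first by pos.
apply: mulr_gt0; first lra.
apply: exprn_gt0; lra.
Qed.

Lemma key n m : (100 <= n)%N -> (1 <= m)%N -> (m < 11)%N ->
  Pm n m < cc * (1 - 1 / (n - m)%:R) ^+ m * h (n - m)%:R * Qm n m.
Proof.
move=> hn.
case: m => [|[|[|[|[|[|[|[|[|[|[|m]]]]]]]]]]] hm1 hm11.
- exfalso; lia.
- exact: key1 n hn.
- exact: key2 n hn.
- exact: key3 n hn.
- exact: key4 n hn.
- exact: key5 n hn.
- exact: key6 n hn.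
- exact: key7 n hn.
- exact: key8 n hn.
- exact: key9 n hn.
- exact: key10 n hn.
- exfalso; lia.
Qed.

Theorem lemma4 (n m : nat) :
  (100 <= n)%N -> (1 <= m)%N -> (m < 11)%N -> f n m < f n m.+1.
Proof.
move=> h100 hm1 hm11.
have H1 : (m < n)%N by lia.
have H2 : (m.+1 < n)%N by lia.
rewrite (fE n m H1) (fE n m.+1 H2).
have hn : n%:R != 0 :> rat by rewrite pnatr_eq0; lia.
have hnm : (n - m)%:R != 0 :> rat by rewrite pnatr_eq0; lia.
have EB : (n - m.+1)%:R / n%:R = (n - m)%:R / n%:R * (1 - 1 / (n - m)%:R) :> rat.
  have e1 : (n - m.+1)%:R = (n - m)%:R - 1 :> rat.
    rewrite (_ : (n - m)%N = (n - m.+1).+1); last lia.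
    by rewrite -natr1 addrK.
  rewrite e1; field. by rewrite hnm hn.
rewrite EB [in X in _ < X]exprMn.
rewrite -[in X in _ < X]mulrA ltr_pM2l; last first.
  by apply: exprn_gt0; apply: divr_gt0; rewrite ltr0n; lia.
rewrite -/(Pm n m).

apply: lt_le_trans (key n m h100 hm1 hm11) _.
rewrite -/(Qm n m).
apply: ler_wpM2r.
  rewrite /Qm; apply: sumr_ge0 => k _; apply: mulr_ge0; first exact: ler0n.
  by apply: exprn_ge0; apply: divr_ge0; exact: ler0n.
have H3 : (90 <= n - m)%N by lia.
have := sbound (n - m) m H3; rewrite subnK; first exact.
lia.
Qed.
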